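(* Let $p\in\{1,2,\dots\}\cup\{\infty\}$ and let $\mathbf{\Delta}:\ell^n\to\ell^n$ be strictly causal. Assume that for some $\rho>0$ and $0\le\gamma<1$, $\|\mathbf{\Delta}(\mathbf{x})\|_p\le\gamma\|\mathbf{x}\|_p$ for all $\mathbf{x}\in\ell^n$ with $\|\mathbf{x}\|_p<\rho$. Then $(\mathbf{I}-\mathbf{\Delta})^{-1}$ is continuous at $\mathbf{w}=0$ as a map $\ell^n_p\to\ell^n_p$: for every $\varepsilon>0$ there exists $\delta>0$ such that $\|\mathbf{w}\|_p<\delta$ implies $\|(\mathbf{I}-\mathbf{\Delta})^{-1}(\mathbf{w})\|_p<\varepsilon$ (in fact one can take $\delta=(1-\gamma)\min\{\rho,\varepsilon\}$).
   Context: $\ell^n$ is the space of sequences in $\mathbb{R}^n$; $|\cdot|$ a fixed norm on $\mathbb{R}^n$; $\|\cdot\|_p$ the usual $\ell_p$ norm of sequences built from $|\cdot|$ (sup for $p=\infty$), $\ell^n_p=\{\mathbf{x}:\|\mathbf{x}\|_p<\infty\}$. $\mathbf{\Delta}$ strictly causal means $(\mathbf{\Delta}(\mathbf{x}))_t=\Delta_t(x_{t-1},\dots,x_0)$; then $(\mathbf{I}-\mathbf{\Delta})^{-1}(\mathbf{w})$ is the unique $\mathbf{y}$ with $\mathbf{y}=\mathbf{\Delta}(\mathbf{y})+\mathbf{w}$. *)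

(* Defs.v *)
From HB Require Import structures.
From mathcomp Require Import all_boot all_order all_algebra.
From mathcomp Require Import all_classical all_reals all_analysis.
Set Implicit Arguments. Unset Strict Implicit. Unset Printing Implicit Defensive.
Import Order.TTheory GRing.Theory Num.Theory.
Local Open Scope ring_scope.
Local Open Scope classical_set_scope.

(* Exponents p in {1,2,...} U {oo}: PFin k stands for p = k (k >= 1 is
   required separately by [valid_exponent]), PInf for p = oo. *)
Inductive exponent := PFin of nat | PInf.

Definition valid_exponent (p : exponent) : Prop :=
  match p with PFin k => (0 < k)%N | PInf => True end.

Definition is_norm (R : realType) (n : nat) (N : 'rV[R]_n -> R) : Prop :=
  [/\ forall x, 0 <= N x,
      forall x, N x = 0 -> x = 0,
      forall (a : R) x, N (a *: x) = `|a| * N x &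
      forall x y, N (x + y) <= N x + N y].

Definition ellseq (R : realType) (n : nat) := nat -> 'rV[R]_n.
Arguments ellseq : clear implicits.

(* The ell_p norm of a sequence built from N, valued in the extended reals
   (it is +oo exactly when the sequence is not in ell^n_p). *)
Definition lp_norm (R : realType) (n : nat) (N : 'rV[R]_n -> R)
    (p : exponent) (x : ellseq R n) : \bar R :=
  match p with
  | PFin k =>
      match (\sum_(0 <= t <oo) ((N (x t)) ^+ k)%:E)%E with
      | EFin s => (s `^ (k%:R^-1))%:E
      | _ => +oo%E
      end
  | PInf => ereal_sup (range (fun t => (N (x t))%:E))
  end.

Definition strictly_causal (R : realType) (n : nat)
    (D : ellseq R n -> ellseq R n) : Prop :=
  forall (x y : ellseq R n) (t : nat),
    (forall s, (s < t)%N -> x s = y s) -> D x t = D y t.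

(* Main.v *)
Require Import Defs.
From HB Require Import structures.
From mathcomp Require Import all_boot all_order all_algebra.
From mathcomp Require Import all_classical all_reals all_analysis.
Import Order.TTheory GRing.Theory Num.Theory.
Local Open Scope ring_scope.

Section Lr.
Variable R : realType.

Definition Lr (p : exponent) (a : nat -> R) : \bar R :=
  match p with
  | PFin k =>
      match (\sum_(0 <= t <oo) ((a t) ^+ k)%:E)%E with
      | EFin s => (s `^ (k%:R^-1))%:E
      | _ => +oo%E
      end
  | PInf => ereal_sup (range (fun t => (a t)%:E))
  end.

Lemma lp_LrE n (N : 'rV[R]_n -> R) p x : lp_norm N p x = Lr p (fun t => N (x t)).
Proof. by case: p. Qed.

Local Open Scope ereal_scope.

Lemma LrE k (a : nat -> R) : (forall t, 0 <= a t)%R -> (0 < k)%N ->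
  Lr (PFin k) a = (\sum_(0 <= t <oo) ((a t) ^+ k)%:E) `^ (k%:R^-1).
Proof.
move=> a0 k0 /=.
have : 0 <= \sum_(0 <= t <oo) ((a t) ^+ k)%:E.
  by apply: nneseries_ge0 => t _ _; rewrite lee_fin exprn_ge0.
case: (\sum_(0 <= t <oo) _) => [s| |] h.
- by rewrite poweR_EFin.
- by rewrite poweRyr // invr_eq0 pnatr_eq0 -lt0n.
- by move: h.

Qed.

Lemma LrLnorm k (a : nat -> R) : (forall t, 0 <= a t)%R -> (0 < k)%N ->
  Lr (PFin k) a = Lnorm (@counting nat R) (k%:R)%:E (EFin \o a).
Proof.
move=> a0 k0; rewrite LrE // Lnorm_counting; last by rewrite ltr0n.
congr (_ `^ _); apply: eq_eseriesr => t _ /=.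
by rewrite ger0_norm // powR_mulrn.
Qed.


Lemma Lr_ge0 p (a : nat -> R) : (forall t, 0 <= a t)%R -> valid_exponent p ->
  0 <= Lr p a.
Proof.
move=> a0; case: p => [k k0|_].
- rewrite LrE //; exact: poweR_ge0.
- apply: le_ereal_sup_tmp; exists (a 0%N)%:E; first by exists 0%N.
  by rewrite lee_fin.
Qed.

Lemma Lr_mono p (a b : nat -> R) : (forall t, 0 <= a t)%R ->
  (forall t, a t <= b t)%R -> valid_exponent p -> Lr p a <= Lr p b.
Proof.
move=> a0 ab; have b0 : forall t, (0 <= b t)%R by move=> t; exact: le_trans (ab t).
case: p => [k k0|_].
- rewrite !LrE //; apply: gt0_ler_poweR.
  + by rewrite invr_ge0 ler0n.
  + by rewrite in_itv /= leey andbT; apply: nneseries_ge0 => t _ _; rewrite lee_fin exprn_ge0.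
  + by rewrite in_itv /= leey andbT; apply: nneseries_ge0 => t _ _; rewrite lee_fin exprn_ge0.
  + apply: lee_nneseries; first by move=> t _ _; rewrite lee_fin exprn_ge0.
    by move=> t _; rewrite lee_fin lerXn2r // nnegrE.
- apply: ge_ereal_sup => _ [t _ <-].
  apply: le_ereal_sup_tmp; exists (b t)%:E; first by exists t.
  by rewrite lee_fin.
Qed.

Lemma Lr_add p (a b : nat -> R) : (forall t, 0 <= a t)%R ->
  (forall t, 0 <= b t)%R -> valid_exponent p ->
  Lr p (fun t => a t + b t)%R <= Lr p a + Lr p b.
Proof.
move=> a0 b0; case: p => [k k0|_].
- have ab0 : forall t, (0 <= a t + b t)%R by move=> t; rewrite addr_ge0.
  rewrite !LrLnorm //.
  have -> : (fun t => a t + b t)%R = (a \+ b)%R by [].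
  by apply: minkowski_EFin => //; rewrite ler1n.
- apply: ge_ereal_sup => _ [t _ <-].
  rewrite EFinD; apply: leeD.
  + by apply: ereal_sup_ubound; exists t.
  + by apply: ereal_sup_ubound; exists t.
Qed.


Lemma in0y (x : \bar R) : 0 <= x -> x \in `[0%R, +oo].
Proof. by move=> x0; rewrite in_itv /= leey andbT. Qed.

Lemma Lr_trunc p (a : nat -> R) (c : R) : (forall t, 0 <= a t)%R -> (0 <= c)%R ->
  valid_exponent p ->
  (forall T, Lr p (fun t => if (t < T)%N then a t else 0%R) <= c%:E) ->
  Lr p a <= c%:E.
Proof.
move=> a0 c0; case: p => [k k0|_] H; last first.
  apply: ge_ereal_sup => _ [t _ <-].
  apply: le_trans (H t.+1); apply: ereal_sup_ubound; exists t => //=.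
  by rewrite ltnSn.
have tr0 : forall T t, (0 <= (if (t < T)%N then a t else 0))%R.
  by move=> T t; case: ifP.
have kr : (k%:R^-1 * k%:R = 1 :> R)%R by rewrite mulVf // pnatr_eq0 -lt0n.
have kr' : (k%:R * k%:R^-1 = 1 :> R)%R by rewrite mulfV // pnatr_eq0 -lt0n.
have ir0 : (0 <= k%:R^-1 :> R)%R by rewrite invr_ge0 ler0n.
have ST : forall T, \sum_(0 <= i < T) ((a i) ^+ k)%:E <= c%:E `^ k%:R.
  move=> T.
  have S0 : 0 <= \sum_(0 <= i < T) ((a i) ^+ k)%:E.
    by apply: sume_ge0 => i _; rewrite lee_fin exprn_ge0.
  have S1 : \sum_(0 <= i < T) ((a i) ^+ k)%:E <=
      \sum_(0 <= i <oo) (((if (i < T)%N then a i else 0%R)) ^+ k)%:E.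
    apply: le_trans (nneseries_lim_ge T _); last first.
      by move=> i _ _; rewrite lee_fin exprn_ge0.
    rewrite le_eqVlt; apply/orP; left; apply/eqP.
    apply: eq_big_nat => i /andP[_ iT]; by rewrite iT.
  have S2 : (\sum_(0 <= i < T) ((a i) ^+ k)%:E) `^ k%:R^-1 <= c%:E.
    apply: le_trans (H T); rewrite LrE //.
    apply: gt0_ler_poweR => //.
    - by rewrite in_itv /= leey andbT.
    - by rewrite in_itv /= leey andbT; apply: nneseries_ge0 => t _ _; rewrite lee_fin exprn_ge0.
  have E : \sum_(0 <= i < T) ((a i) ^+ k)%:E =
    ((\sum_(0 <= i < T) ((a i) ^+ k)%:E) `^ k%:R^-1) `^ k%:R.
    by rewrite -poweRrM kr poweRe1.
  rewrite E.
  apply: gt0_ler_poweR => //.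
  - by apply: in0y; exact: poweR_ge0.
  - by rewrite in_itv /= leey andbT lee_fin.
have Sig : \sum_(0 <= i <oo) ((a i) ^+ k)%:E <= c%:E `^ k%:R.
  apply: lime_le.
  - by apply: is_cvg_nneseries => i _ _; rewrite lee_fin exprn_ge0.
  - by apply: nearW => T; exact: ST.
rewrite LrE //.
apply: (le_trans (y := (c%:E `^ k%:R) `^ k%:R^-1)).
- apply: gt0_ler_poweR => //.
  + by rewrite in_itv /= leey andbT; apply: nneseries_ge0 => t _ _; rewrite lee_fin exprn_ge0.
  + by apply: in0y; exact: poweR_ge0.
- by rewrite -poweRrM kr' poweRe1.
Qed.

End Lr.
Arguments Lr {R}.
Arguments lp_LrE {R n}.
Arguments Lr_ge0 {R}.
Arguments Lr_mono {R}.
Arguments Lr_add {R}.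
Arguments Lr_trunc {R}.

Theorem mainTheorem7 (R : realType) (n : nat) (N : 'rV[R]_n -> R)
  (p : exponent) (D : ellseq R n -> ellseq R n) (rho gamma : R) :
  is_norm N -> valid_exponent p -> strictly_causal D ->
  0 < rho -> 0 <= gamma -> gamma < 1 ->
  (forall x : ellseq R n, (lp_norm N p x < rho%:E)%E ->
     (lp_norm N p (D x) <= gamma%:E * lp_norm N p x)%E) ->
  forall eps : R, 0 < eps ->
  exists delta : R, 0 < delta /\
    forall w y : ellseq R n,
      (lp_norm N p w < delta%:E)%E ->
      (forall t, y t = D y t + w t) ->
      (lp_norm N p y < eps%:E)%E.
Proof.
move=> [N0 _ NZ ND] vp cD rho0 g0 g1 HD eps eps0.
have N00 : N 0 = 0.
  by rewrite -(scale0r (0 : 'rV[R]_n)) NZ normr0 mul0r.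
set m := Num.min rho eps.
have m0 : 0 < m by rewrite lt_min rho0 eps0.
have g10 : 0 < 1 - gamma by rewrite subr_gt0.
exists ((1 - gamma) * m); split; first by rewrite mulr_gt0.
move=> w y Hw Hy.
have Lw0 := Lr_ge0 p (fun t => N (w t)) (fun t => N0 (w t)) vp.
rewrite lp_LrE in Hw.
case Ew : (Lr p (fun t => N (w t))) Hw Lw0 => [W| |] //= HW W0.
rewrite lte_fin in HW; rewrite lee_fin in W0.
set b := W / (1 - gamma).
have Wb : W = (1 - gamma) * b by rewrite /b mulrC divfK // gt_eqF.
have b0 : 0 <= b by rewrite /b divr_ge0 // ltW.
have bm : b < m by rewrite -(ltr_pM2l g10) -Wb.
have Wleb : W <= b by rewrite Wb ler_piMl // lerBlDr lerDl.
pose tr T : ellseq R n := fun t => if (t < T)%N then y t else 0.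
have Ntr : forall T t, N (tr T t) = if (t < T)%N then N (y t) else 0.
  by move=> T t; rewrite /tr; case: ifP.
have claim : forall T, (lp_norm N p (tr T) <= b%:E)%E.
  elim=> [|T IH].
  - rewrite lp_LrE; apply: (le_trans (y := W%:E)); last by rewrite lee_fin.
    rewrite -Ew; apply: Lr_mono => // t; rewrite Ntr //.
  - have Hrho : (lp_norm N p (tr T) < rho%:E)%E.
      apply: le_lt_trans IH _; rewrite lte_fin (lt_le_trans bm) //.
      by rewrite /m ge_min lexx.
    have HDT := HD _ Hrho.
    rewrite lp_LrE.
    apply: (le_trans (y := Lr p (fun t => N (D (tr T) t) + N (w t)))).
      apply: Lr_mono => //.
      move=> t; rewrite Ntr; case: ifP => tT; last by rewrite addr_ge0.
      rewrite Hy; apply: le_trans (ND _ _) _.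
      rewrite (cD y (tr T) t) //.
      move=> s st; rewrite /tr ifT //.
      by apply: leq_trans st _; rewrite -ltnS.
    apply: le_trans (Lr_add p _ _ (fun t => N0 _) (fun t => N0 _) vp) _.
    rewrite Ew -lp_LrE.
    apply: (le_trans (y := (gamma%:E * b%:E + W%:E)%E)).
      apply: leeD => //; apply: le_trans HDT _.
      by apply: lee_wpmul2l => //; rewrite lee_fin.
    by rewrite -EFinM -EFinD lee_fin Wb mulrBl mul1r addrC subrK.
have : (lp_norm N p y <= b%:E)%E.
  rewrite lp_LrE; apply: Lr_trunc => //.
  move=> T; have := claim T; rewrite lp_LrE.
  have -> : (fun t => N (tr T t)) = (fun t => if (t < T)%N then N (y t) else 0).
    by apply: funext => t; exact: Ntr.
  by [].
move=> /le_lt_trans; apply; rewrite lte_fin (lt_le_trans bm) //.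
by rewrite /m ge_min lexx orbT.
Qed.
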